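(* In the standard LLP setup, suppose $K=\overline{K}$ and there is no starting error in $L(G,\gamma^N_{cons})$ (i.e. $f^N_{cons}(\epsilon)\neq\emptyset$). If $N_u(K)$ is defined and $N\ge N_u(K)+2$, then $L(G,\gamma^N_{cons})=\overline{K^\uparrow}$.
   Context: Standard LLP setup. $\Sigma=\Sigma_c\,\dot\cup\,\Sigma_{uc}$ is a finite alphabet partitioned into controllable and uncontrollable events. The plant $G$ has generated language $L(G)$ and marked language $L_m(G)$ with $L(G)=\overline{L_m(G)}$ ($\overline{M}$ = set of prefixes of strings in $M$). The legal language $K\subseteq L_m(G)$ satisfies $K=\overline{K}\cap L_m(G)$. For a prefix-closed $L$, $M$ is controllable w.r.t. $L$ if $\overline{M}\Sigma_{uc}\cap L\subseteq\overline{M}$; $K^\uparrow$ is the supremal sublanguage of $K$ controllable w.r.t. $L(G)$. For a language $L$ and $s\in\Sigma^*$: $L/s=\{t: st\in L\}$; $L|_N=\{t\in L:|t|\le N\}$; $\Sigma_{L(G)}(s)=\{\sigma\in\Sigma: s\sigma\in L(G)\}$. $M^{\uparrow/s|_N}$ is the supremal sublanguage of $M$ controllable w.r.t. $L(G)/s|_N$. Conservative attitude: $f^N_{cons}(s)=[K/s|_{N-1}]^{\uparrow/s|_N}$; control policy $\gamma^N_{cons}(s)=(\overline{f^N_{cons}(s)}\cap\Sigma)\cup(\Sigma_{uc}\cap\Sigma_{L(G)}(s))$. Closed-loop language $L(G,\gamma)$: $\epsilon\in L(G,\gamma)$, and $s\sigma\in L(G,\gamma)$ iff $s\in L(G,\gamma)$,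 $s\sigma\in L(G)$, $\sigma\in\gamma(s)$. For a language $L$, $N_u(L)=\max\{|t|: t\in\Sigma_{uc}^*,\ \exists u,v\in\Sigma^*,\ utv\in L\}$ if this maximum exists; otherwise undefined. *)

(* Defs.v *)
From mathcomp Require Import all_boot.
Set Implicit Arguments. Unset Strict Implicit. Unset Printing Implicit Defensive.

Section Lang.
Variable A : finType.

Definition lang := seq A -> Prop.

Definition lsub (M L : lang) : Prop := forall s, M s -> L s.

Definition pref (M : lang) : lang := fun s => exists t, M (s ++ t).

Definition controllable (uc : pred A) (M L : lang) : Prop :=
  forall s a, pref M s -> uc a -> L (rcons s a) -> pref M (rcons s a).

Definition supC (uc : pred A) (M L : lang) : lang :=
  fun s => exists M' : lang, [/\ lsub M' M, controllable uc M' L & M' s].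

Definition quot (L : lang) (s : seq A) : lang := fun t => L (s ++ t).

Definition trunc (L : lang) (N : nat) : lang := fun t => L t /\ size t <= N.

Definition f_cons (uc : pred A) (LG K : lang) (N : nat) (s : seq A) : lang :=
  supC uc (trunc (quot K s) N.-1) (trunc (quot LG s) N).

Definition gamma_cons (uc : pred A) (LG K : lang) (N : nat) (s : seq A) (a : A)
  : Prop :=
  pref (f_cons uc LG K N s) [:: a] \/ (uc a /\ LG (rcons s a)).

Inductive closed_loop (LG : lang) (gamma : seq A -> A -> Prop) : lang :=
| cl_nil : closed_loop LG gamma [::]
| cl_step s a : closed_loop LG gamma s -> LG (rcons s a) -> gamma s a ->
    closed_loop LG gamma (rcons s a).

(* "N_u(L) is defined and equals n": n is the maximum length of a string of
   uncontrollable events occurring as a substring of a string of L *)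
Definition Nu_is (uc : pred A) (L : lang) (n : nat) : Prop :=
  (exists t u v, [/\ all uc t, size t = n & L (u ++ t ++ v)]) /\
  (forall t u v, all uc t -> L (u ++ t ++ v) -> size t <= n).

End Lang.

(* Main.v *)
Require Import Defs.
From mathcomp Require Import all_boot.
From mathcomp Require Import zify.

Theorem theorem10 (A : finType) (uc : pred A) (LG LmG K : lang A) (N : nat) :
  (forall s, LG s <-> pref LmG s) ->
  lsub K LmG ->
  (forall s, K s <-> pref K s /\ LmG s) ->
  (forall s, K s <-> pref K s) ->
  (exists t, f_cons uc LG K N [::] t) ->
  (exists n, Nu_is uc K n /\ n + 2 <= N) ->
  forall s, closed_loop LG (gamma_cons uc LG K N) s <-> pref (supC uc K LG) s.
Proof.
move=> HLG HKm HK1 HKp [t0 Ht0] [n [[_ Hnu] HnN]] s.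
have LGpc : forall x w, LG (x ++ w) -> LG x.
  move=> x w /HLG [v Hv]; apply/HLG; exists (w ++ v); by rewrite catA.
have Kpc : forall x w, K (x ++ w) -> K x.
  move=> x w H; apply/HKp; by exists w.
have KLG : forall x, K x -> LG x.
  move=> x /HKm H; apply/HLG; exists [::]; by rewrite cats0.
have Pu : forall M : lang A, controllable uc M LG -> forall x u,
    pref M x -> all uc u -> LG (x ++ u) -> pref M (x ++ u).
  move=> M HMc x u; elim/last_ind: u => [|u b IH] Hx.
    by rewrite cats0.
  rewrite all_rcons => /andP [Hb Hu] HL.
  rewrite -cats1 catA in HL.
  rewrite -cats1 catA cats1; apply: HMc => //; last by rewrite -cats1.
  exact: IH _ _ (LGpc _ _ HL).
have prefK : forall M : lang A, lsub M K -> forall x, pref M x -> K x.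
  move=> M HMK x [w Hw]; exact: Kpc _ _ (HMK _ Hw).
have Dec : forall (x y z : seq A) b, rcons x b = y ++ z ->
    y = rcons x b \/ exists z', x = y ++ z'.
  move=> x y z b; case/lastP: z => [|z' c]; rewrite ?cats0; first by left.
  rewrite -rcons_cat => /rcons_inj [-> _]; right; by exists z'.
split.
- pose Good := fun x => K x /\ forall y z u, x = y ++ z -> all uc u ->
     LG (y ++ u) -> K (y ++ u).
  have GoodPc : forall x, pref Good x -> Good x.
    move=> x [w [HK HP]]; split; first exact: Kpc _ _ HK.
    move=> y z u Hx; apply: (HP y (z ++ w)); by rewrite Hx catA.
  have GoodStep : forall x b, Good x -> uc b -> LG (rcons x b) -> Good (rcons x b).
    move=> x b [HK HP] Hb HL; split.
      rewrite -cats1; apply: (HP x [::]); rewrite ?cats0 ?cats1 //=; by rewrite Hb.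
    move=> y z u /Dec [->|[z' Hz']] Hu HL'.
      rewrite cat_rcons; apply: (HP x [::]); rewrite ?cats0 //=; first by rewrite Hb.
      by rewrite -cat_rcons.
    exact: (HP y z').
  have GoodC : controllable uc Good LG.
    move=> x b /GoodPc Hx Hb HL; exists [::]; rewrite cats0; exact: GoodStep.
  have L1 : forall s M, lsub M (trunc (quot K s) N.-1) ->
      controllable uc M (trunc (quot LG s) N) -> forall x u, pref M x ->
      all uc u -> LG (s ++ x ++ u) -> pref M (x ++ u).
    move=> s0 M HMs HMc x u; elim/last_ind: u => [|u b IH] Hx.
      by rewrite cats0.
    rewrite all_rcons => /andP [Hb Hu] HL.
    rewrite -cats1 !catA in HL.
    have H1 : pref M (x ++ u) by apply: IH => //; rewrite catA; exact: LGpc _ _ HL.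
    rewrite -cats1 catA cats1; apply: HMc => //; split.
      by rewrite /quot -cats1 !catA.
    case: H1 => w /HMs [_ Hsz]; rewrite size_rcons; move: Hsz; rewrite !size_cat; lia.
  have L1' : forall s M, lsub M (trunc (quot K s) N.-1) ->
      forall y, pref M y -> K (s ++ y).
    move=> s0 M HMs y [w /HMs [Hw _]]; move: Hw; rewrite /quot catA; exact: Kpc.
  suff H : forall s, closed_loop LG (gamma_cons uc LG K N) s -> Good s.
    move=> Hs; exists [::]; exists Good; split => //; first by move=> x [].
    by rewrite cats0; apply H.
  move=> s1; elim => [|s' a Hcl IH HLa Hg].
    case: Ht0 => M [HMs HMc HMt].
    have HM0 : pref M [::] by exists t0.
    split; first exact: (L1' [::] M HMs [::] HM0).
    move=> y z u; case: y => [|//] _ Hu HL.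
    exact: (L1' [::] M HMs _ (L1 [::] M HMs HMc [::] u HM0 Hu HL)).
  case: Hg => [[w [M [HMs HMc HMt]]] | [Huc _]]; last first.
    exact: GoodStep.
  have HMa : pref M [:: a] by exists w.
  split; first by rewrite -cats1; exact: (L1' _ _ HMs _ HMa).
  move=> y z u /Dec [->|[z' Hz']] Hu HL'.
    rewrite cat_rcons; apply: (L1' _ _ HMs); apply: (L1 _ _ HMs HMc [:: a]) => //.
    by rewrite -cat_rcons.
  exact: (IH.2 y z').
- move=> [t [M [HMK HMc HMt]]].
  have : pref M s by exists t.
  clear t HMt.
  elim/last_ind: s => [|s' a IH] Hp; first exact: cl_nil.
  have Hs' : pref M s' by case: Hp => w Hw; exists (a :: w); rewrite -cat_rcons.
  apply: cl_step; first exact: IH.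
    apply: KLG; exact: prefK _ HMK _ Hp.
  left; exists [::].
  exists (fun t => [/\ K (s' ++ t), size t <= N.-1 &
     (all uc t \/ exists u, t = a :: u /\ all uc u)]).
  split.
  + by move=> x [H1 H2 _].
  + move=> x b [w [Hw1 Hw2 Hw3]] Hb [HL Hsz].
    have Hx : all uc x \/ exists u, x = a :: u /\ all uc u.
      case: Hw3 => [|[u [Hu1 Hu2]]]; first by rewrite all_cat => /andP [] ; left.
      move: Hu1; destruct x as [|c x']; first by left.
      case=> -> Hu; right; exists x'; split => //; move: Hu2; rewrite -Hu all_cat.
      by case/andP.
    exists [::]; rewrite cats0.
    case: Hx => [Hx | [u [Ex Hu]]]; last subst x.
      have HK : K (s' ++ rcons x b ++ [::]).
        rewrite cats0; apply: (prefK _ HMK); apply: Pu => //.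
        by rewrite all_rcons Hb Hx.
      have Hs : size (rcons x b) <= n by apply: (Hnu _ _ _ _ HK); rewrite all_rcons Hb Hx.
      split; [by move: HK; rewrite cats0 | lia |].
      by left; rewrite all_rcons Hb Hx.
    have HK : K (rcons s' a ++ rcons u b ++ [::]).
      rewrite cats0; apply: (prefK _ HMK); apply: Pu => //.
        by rewrite all_rcons Hb Hu.
      rewrite cat_rcons; exact: HL.
    have Hs : size (rcons u b) <= n by apply: (Hnu _ _ _ _ HK); rewrite all_rcons Hb Hu.
    rewrite size_rcons in Hs.
    split; [by move: HK; rewrite cats0 cat_rcons | rewrite /= size_rcons; lia |].
    by right; exists (rcons u b); rewrite all_rcons Hb Hu.
  + split; [by rewrite cats1; exact: (prefK _ HMK) | rewrite /=; lia |].
    by right; exists [::].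
Qed.
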